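(* Let $n=2^s$, $q=2^r$ ($s,r$ positive integers) and $N=q^{\binom{n}{2}}\prod_{j=2}^{n}(q^j-1)=|SL(n,q)|$. For $a\in\mathbb{F}_q^*$, the Hamming weight of the codeword $c(a)=(tr(a\,Tr(g_1)),\dots,tr(a\,Tr(g_N)))\in\mathbb{F}_2^N$ is \[ w(c(a))=\tfrac12\Big(N-q^{\binom{n}{2}}K_{n-1}(\lambda;a)\Big). \]
   Context: $\mathbb{F}_q$ is the field with $q$ elements, $tr$ the absolute trace to $\mathbb{F}_2$, $\lambda(x)=(-1)^{tr(x)}$. $g_1,\dots,g_N$ is an ordering of $SL(n,q)$ and $Tr$ the matrix trace. For $m\ge1$, $K_m(\lambda;a)=\sum_{\alpha_1,\dots,\alpha_m\in\mathbb{F}_q^*}\lambda(\alpha_1+\cdots+\alpha_m+a\alpha_1^{-1}\cdots\alpha_m^{-1})$. *)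

(* Defs.v *)
From HB Require Import structures.
From mathcomp Require Import all_boot all_order all_algebra all_field.
Set Implicit Arguments. Unset Strict Implicit. Unset Printing Implicit Defensive.
Import Order.TTheory GRing.Theory Num.Theory.
Local Open Scope ring_scope.

(* Absolute trace F_q -> F_2 for q = 2^r, valued in F (its values are 0 or 1):
   tr x = x + x^2 + x^4 + ... + x^(2^(r-1)). *)
Definition abs_tr (F : finFieldType) (r : nat) (x : F) : F :=
  \sum_(i < r) x ^+ (2 ^ i)%N.

Definition lam (F : finFieldType) (r : nat) (x : F) : rat :=
  if abs_tr r x == 0 then 1 else -1.

Definition Kloost (F : finFieldType) (r m : nat) (a : F) : rat :=
  \sum_(al : {ffun 'I_m -> F} | [forall i, al i != 0])
     lam r (\sum_(i < m) al i + a * (\prod_(i < m) al i)^-1).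

Definition SLset (F : finFieldType) (n : nat) : {set 'M[F]_n} :=
  [set g : 'M[F]_n | \det g == 1].

Definition weight_ca (F : finFieldType) (r n : nat) (a : F) : nat :=
  #|[set g in SLset F n | abs_tr r (a * \tr g) != 0]|.

(* Main.v *)
Require Import Defs.
From HB Require Import structures.
From mathcomp Require Import all_boot all_order all_algebra all_field.
From mathcomp Require Import zify ring.
Import GRing.Theory Num.Theory.
Local Open Scope ring_scope.



Section Tr.
Variables (F : finFieldType) (r : nat).
Hypotheses (hr : (0 < r)%N) (hF : #|F| = (2 ^ r)%N).

Lemma char2 : (2 \in [pchar F])%N.
Proof. exact: card_finPcharP hF _. Qed.

Lemma two0 : (2%:R : F) = 0.
Proof. exact: pcharf0 char2. Qed.

Lemma frob2 (x y : F) : (x + y) ^+ 2 = x ^+ 2 + y ^+ 2.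
Proof. by rewrite sqrrD -mulr_natr two0 mulr0 addr0. Qed.

Lemma frobk k (x y : F) : (x + y) ^+ (2 ^ k) = x ^+ (2 ^ k) + y ^+ (2 ^ k).
Proof.
elim: k => [|k IH]; first by rewrite !expr1.
by rewrite expnSr !exprM IH frob2.
Qed.

Lemma sq_sum (I : Type) (s : seq I) (P : pred I) (G : I -> F) :
  (\sum_(i <- s | P i) G i) ^+ 2 = \sum_(i <- s | P i) G i ^+ 2.
Proof.
apply: (big_morph (fun z : F => z ^+ 2)); first exact: frob2.
by rewrite expr0n.
Qed.

Lemma T_add (x y : F) : abs_tr r (x + y) = abs_tr r x + abs_tr r y.
Proof. by rewrite /abs_tr -big_split; apply: eq_bigr => i _; rewrite frobk. Qed.

Lemma T_sq (x : F) : abs_tr r x ^+ 2 = abs_tr r x.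
Proof.
rewrite /abs_tr sq_sum.
under eq_bigr do rewrite -exprM -expnSr.
rewrite -(prednK hr) big_ord_recr big_ord_recl /= expn0 expr1.
rewrite (prednK hr) -hF expf_card addrC; congr (_ + _).
Qed.

Lemma T01 (x : F) : abs_tr r x = 0 \/ abs_tr r x = 1.
Proof.
have := T_sq x; set t := abs_tr r x => h.
have : t * (t - 1) = 0 by rewrite mulrBr mulr1 -expr2 h subrr.
by move/eqP; rewrite mulf_eq0 subr_eq0 => /orP[] /eqP; [left|right].
Qed.

Lemma lam_add (x y : F) : lam r (x + y) = lam r x * lam r y.
Proof.
rewrite /lam T_add.
have two : (1 + 1 : F) = 0 by rewrite -two0.
case: (T01 x) => ->; case: (T01 y) => ->;
  rewrite ?addr0 ?add0r ?two ?eqxx ?oner_eq0 /=; by rewrite ?mulr1 ?mul1r ?mulrNN ?mulr1.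
Qed.

Lemma lam0 : lam r (0 : F) = 1.
Proof.
rewrite /lam /abs_tr big1 ?eqxx // => i _.
by rewrite expr0n expn_eq0.
Qed.

Lemma T_sqr (x : F) : abs_tr r (x ^+ 2) = abs_tr r x.
Proof.
rewrite -[RHS]T_sq /abs_tr sq_sum; apply: eq_bigr => i _.
by rewrite -!exprM mulnC.
Qed.

Lemma lam_sqr (x : F) : lam r (x ^+ 2) = lam r x.
Proof. by rewrite /lam T_sqr. Qed.

Lemma lam_frob s (x : F) : lam r (x ^+ (2 ^ s)) = lam r x.
Proof.
elim: s => [|s IH]; first by rewrite expr1.
by rewrite expnSr exprM lam_sqr.
Qed.

Lemma T_nz : exists y : F, abs_tr r y != 0.
Proof.
apply/existsP; apply: contraT; rewrite negb_exists => /forallP H.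
pose p : {poly F} := \sum_(i < r) 'X^(2 ^ i).
have pE x : p.[x] = abs_tr r x.
  by rewrite /p horner_sum; apply: eq_bigr => i _; rewrite hornerXn.
have p0 : p != 0.
  apply/eqP => /(congr1 (fun q : {poly F} => q`_((2 ^ r.-1)%N))).
  rewrite coef0 /p coef_sum (bigD1 (@Ordinal r r.-1 ltac:(by rewrite ltn_predL))) //=.
  rewrite coefXn eqxx big1 ?addr0 => [|i ne]; first by move/eqP; rewrite oner_eq0.
  rewrite coefXn eqn_exp2l //.
  have -> : (r.-1 == i) = false; last by [].
  apply/negbTE; apply: contra ne => /eqP e; apply/eqP; apply: val_inj; by rewrite /= e.
have := max_poly_roots p0 (rs := enum F).
rewrite enum_uniq; have -> : all (root p) (enum F).
  by apply/allP => x _; rewrite /root pE; move: (H x); rewrite negbK.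
move=> /(_ isT isT); rewrite -cardE hF.
have : (size p <= (2 ^ r.-1).+1)%N.
  apply: leq_trans (size_sum _ _ _) _.
  apply/bigmax_leqP => i _; rewrite size_polyXn ltnS leq_pexp2l //.
  by rewrite -ltnS prednK.
move=> h1 h2; have := leq_trans h2 h1.
rewrite ltnS -{1}(prednK hr) expnS.
have := expn_gt0 2 r.-1; lia.
Qed.

Lemma lam_sum0 : \sum_(x : F) lam r x = 0.
Proof.
have [y hy] := T_nz.
have ly : lam r y = -1.
  by rewrite /lam (negbTE hy).
set S := \sum_x _.
have : S = - S.
  rewrite {1}/S (reindex_inj (addIr y)) /=.
  under eq_bigr do rewrite lam_add ly.
  by rewrite -big_distrl /= mulrN1.
move/eqP; rewrite -subr_eq0 opprK -mulr2n -mulr_natr mulf_eq0 /= => /orP[/eqP //|].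
by [].
Qed.

End Tr.



Section Mat.
Variables (F : finFieldType).

Lemma det_aff m (x : 'M[F]_1) (u : 'rV[F]_m) (v : 'cV[F]_m) (D : 'M[F]_m) :
  \det (block_mx x u v D : 'M_(1 + m)) = x 0 0 * \det D + \det (block_mx 0 u v D : 'M_(1 + m)).
Proof.
have -> : \det D = \det (block_mx 1%:M 0 v D : 'M_(1 + m)).
  by rewrite det_lblock det1 mul1r.
rewrite -[X in _ + X]mul1r.
have e0 : (0 : 'I_(1 + m)) = lshift m 0 by apply: val_inj.
apply: (@determinant_multilinear _ _ _ _ _ 0).
- rewrite -[m.+1]/(1 + m)%N e0 !block_mxEv !rowKu !row_id scale_row_mx !scale1r add_row_mx addr0 scaler0 add0r.
  by rewrite [x in row_mx x _]mx11_scalar scalemx1.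
- rewrite -[m.+1]/(1 + m)%N e0 !block_mxEv !row'Ku.
  by apply/matrixP => i j; rewrite !mxE; case: splitP => k //; case: k.
- rewrite -[m.+1]/(1 + m)%N e0 !block_mxEv !row'Ku.
  by apply/matrixP => i j; rewrite !mxE; case: splitP => k //; case: k.
Qed.


Lemma det_schur m (u : 'rV[F]_m) (v : 'cV[F]_m) (D : 'M[F]_m) :
  D \in unitmx ->
  \det (block_mx 0 u v D : 'M_(1 + m)) = - \det D * (u *m invmx D *m v) 0 0.
Proof.
move=> uD.
have -> : (block_mx 0 u v D : 'M_(1 + m)) =
   block_mx 1%:M (u *m invmx D) 0 1%:M *m block_mx (- (u *m invmx D *m v)) 0 v D.
  by rewrite mulmx_block !mul1mx !mul0mx !add0r addNr -mulmxA mulVmx // mulmx1.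
rewrite (@det_mulmx F (1 + m)) det_ublock det_lblock !det1 !mul1r det_mx11 mxE mulrC mulNr mulrN.
by [].
Qed.

End Mat.

Section Psi.
Variables (F : finFieldType) (psi : F -> rat).
Hypotheses (psi_add : forall x y, psi (x + y) = psi x * psi y)
  (psi0 : psi 0 = 1) (psi_sum0 : \sum_x psi x = 0).

Lemma sum_M1 (G : F -> rat) : \sum_(x : 'M[F]_1) G (x 0 0) = \sum_(t : F) G t.
Proof.
rewrite (reindex (fun t : F => t%:M)) /=; last first.
  by exists (fun x : 'M[F]_1 => x 0 0) => [t _|x _]; rewrite ?mxE // -mx11_scalar.
by apply: eq_bigr => t _; rewrite mxE.
Qed.

Lemma psi_shift (S : rat) : (forall c, psi c * S = S) -> S = 0.
Proof.
move=> h.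
have : \sum_(c : F) psi c * S = \sum_(c : F) S by apply: eq_bigr.
rewrite -big_distrl /= psi_sum0 mul0r sumr_const => /esym/eqP.
by rewrite mulrn_eq0 (cardD1 (0 : F)) /= => /eqP.
Qed.


Lemma sum_vec m (w : 'rV[F]_m) :
  \sum_(v : 'cV[F]_m) psi ((w *m v) 0 0) = if w == 0 then (#|F| ^ m)%:R else 0.
Proof.
case: eqP => [->|/eqP wn0].
  under eq_bigr do rewrite mul0mx mxE psi0.
  by rewrite sumr_const card_mx muln1.
have [j hj] : exists j, w 0 j != 0.
  apply/existsP; apply: contraR wn0; rewrite negb_exists => /forallP h.
  apply/eqP/matrixP => i k; rewrite ord1 mxE; exact/eqP/negPn/h.
apply: psi_shift => c.
set e := (c / w 0 j) *: delta_mx j 0 : 'cV[F]_m.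
rewrite [RHS](reindex_inj (addIr e)) /= big_distrr; apply: eq_bigr => v _.
rewrite /= mulmxDr [X in _ = psi X]mxE psi_add mulrC; congr (_ * psi _).
by rewrite /e -scalemxAr -colE !mxE divfK.
Qed.


Lemma inner (d R b c : F) :
  \sum_(t : F) (if t * d + R == b then psi (t + c) else 0) =
  if d == 0 then 0 else psi ((b - R) / d + c).
Proof.
have [->|d0] := eqVneq d 0.
  under eq_bigr do rewrite mulr0 add0r.
  have [_|_] := eqVneq R b; last by rewrite big1.
  under eq_bigr do rewrite psi_add.
  by rewrite -big_distrl /= psi_sum0 mul0r.
rewrite -big_mkcond /= (big_pred1 ((b - R) / d)) // => t /=.
apply/eqP/eqP => [<-|->]; first by rewrite addrK mulfK.
by rewrite divfK // subrK.
Qed.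

Definition Asum m (b : F) := \sum_(h : 'M[F]_m | \det h == b) psi (\tr h).

Lemma Asum0 c : Asum 0 c = if c == 1 then 1 else 0.
Proof.
rewrite /Asum; under eq_bigl do rewrite det_mx00.
have [_|ne] := eqVneq c 1; last by rewrite big_pred0.
rewrite (big_pred1 0) ?mxtrace0 // => h /=.
by apply/esym/eqP/flatmx0.
Qed.

Lemma Asum_rec m b :
  Asum (1 + m) b = (#|F| ^ m)%:R * \sum_(c | c != 0) psi (b / c) * Asum m c.
Proof.
pose G (h : 'M[F]_(1 + m)) := if \det h == b then psi (\tr h) else 0.
have -> : Asum (1 + m) b = \sum_h G h by rewrite /Asum big_mkcond.
rewrite (reindex (fun p : 'M[F]_m * ('rV[F]_m * ('cV[F]_m * 'M[F]_1)) =>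
   block_mx p.2.2.2 p.2.1 p.2.2.1 p.1 : 'M_(1 + m))) /=; last first.
  exists (fun h : 'M[F]_(1 + m) => (drsubmx h, (ursubmx h, (dlsubmx h, ulsubmx h)))).
    by move=> [D [u [v x]]] _ /=; rewrite block_mxKdr block_mxKur block_mxKdl block_mxKul.
  by move=> h _ /=; rewrite submxK.
transitivity (\sum_D \sum_u \sum_v \sum_(x : 'M[F]_1) G (block_mx x u v D)).
  rewrite -[LHS](pair_bigA _ (fun D q => G (block_mx q.2.2 q.1 q.2.1 D))).
  apply: eq_bigr => D _.
  rewrite -(pair_bigA _ (fun u q => G (block_mx q.2 u q.1 D))).
  apply: eq_bigr => u _.
  by rewrite -(pair_bigA _ (fun v x => G (block_mx x u v D))).
have step1 D u v : \sum_(x : 'M[F]_1) G (block_mx x u v D) =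
    if \det D == 0 then 0
    else psi ((b - \det (block_mx 0 u v D : 'M_(1 + m))) / \det D + \tr D).
  rewrite /G; under eq_bigr do rewrite det_aff mxtrace_block trace_mx11.
  rewrite (sum_M1 (fun t => if t * \det D + \det (block_mx 0 u v D : 'M_(1 + m)) == b
                             then psi (t + \tr D) else 0)).
  exact: inner.
have step2 D : \sum_(u : 'rV[F]_m) \sum_(v : 'cV[F]_m) \sum_(x : 'M[F]_1) G (block_mx x u v D) =
    if \det D == 0 then 0 else (#|F| ^ m)%:R * psi (b / \det D + \tr D).
  under eq_bigr do under eq_bigr do rewrite step1.
  have [d0|dn0] := eqVneq (\det D) 0.
    by rewrite big1 // => u _; rewrite big1.
  have uD : D \in unitmx by rewrite unitmxE unitfE.
  have e s : (b - - \det D * s) / \det D + \tr D = (b / \det D + \tr D) + s.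
    by field.
  under eq_bigr do under eq_bigr do rewrite det_schur // e psi_add.
  under eq_bigr do rewrite -big_distrr /= sum_vec.
  rewrite -big_distrr /= mulrC; congr (_ * _).
  rewrite -big_mkcond (big_pred1 0) // => u /=.
  apply/eqP/eqP => [h|->]; last by rewrite mul0mx.
  by rewrite -(mulmxKV uD u) h mul0mx.
rewrite (eq_bigr _ (fun D _ => step2 D)).
rewrite /Asum big_distrr /=.
rewrite (eq_bigr (fun D : 'M[F]_m => if \det D != 0 then (#|F| ^ m)%:R * psi (b / \det D + \tr D) else 0)) => [|D _]; last by case: eqP.
rewrite -big_mkcond (partition_big (fun D : 'M[F]_m => \det D) (fun c => c != 0)) //=.
apply: eq_bigr => c c0; rewrite !big_distrr /=.
apply: eq_big => [D|D /andP[_ /eqP ->]]; last by rewrite psi_add mulrA.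
by have [->|] := eqVneq (\det D) c; rewrite ?c0 ?andbF.
Qed.

End Psi.



Section Kl.
Variables (F : finFieldType) (r : nat).
Hypotheses (hr : (0 < r)%N) (hF : #|F| = (2 ^ r)%N).

Definition splitff m (p : {ffun 'I_m -> F} * F) : {ffun 'I_m.+1 -> F} :=
  [ffun i => if unlift ord0 i is Some j then p.1 j else p.2].

Lemma splitff0 m p : @splitff m p ord0 = p.2.
Proof. by rewrite ffunE unlift_none. Qed.

Lemma splitffS m p j : @splitff m p (lift ord0 j) = p.1 j.
Proof. by rewrite ffunE liftK. Qed.

Lemma Kloost0 (b : F) : Kloost r 0 b = lam r b.
Proof.
rewrite /Kloost (big_pred1 [ffun i => 0]) => [|f].
  by rewrite big_ord0 big_ord0 invr1 mulr1 add0r.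
rewrite /=; have -> : f == [ffun i => 0] by apply/eqP/ffunP => -[].
by apply/forallP => -[].
Qed.


Lemma Kloost_rec m (b : F) :
  Kloost r m.+1 b = \sum_(c | c != 0) lam r (b / c) * Kloost r m c.
Proof.
rewrite /Kloost (reindex (@splitff m)) /=; last first.
  exists (fun f : {ffun 'I_m.+1 -> F} => ([ffun j => f (lift ord0 j)], f ord0)).
    by move=> [g x] _ /=; rewrite splitff0; congr pair; apply/ffunP => j; rewrite ffunE splitffS.
  move=> f _; apply/ffunP => i; rewrite ffunE.
  by case: unliftP => [j ->|->] /=; rewrite ?ffunE.
have Pe (p : {ffun 'I_m -> F} * F) :
    [forall i, @splitff m p i != 0] = [forall j, p.1 j != 0] && (p.2 != 0).
  apply/forallP/andP => [h|[/forallP h1 h2] i].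
    by split; [apply/forallP => j; rewrite -splitffS; apply: h | rewrite -splitff0; apply: h].
  by case: (unliftP ord0 i) => [j ->|->]; rewrite ?splitffS ?splitff0.
rewrite (eq_bigl _ _ Pe) -(pair_big (fun g : {ffun 'I_m -> F} => [forall j, g j != 0])
   (fun x : F => x != 0)
   (fun g x => lam r (\sum_(i < m.+1) @splitff m (g, x) i +
                      b * (\prod_(i < m.+1) @splitff m (g, x) i)^-1))) /=.
under [RHS]eq_bigr do rewrite big_distrr /=.
rewrite [RHS]exchange_big /=; apply: eq_bigr => g gP.
have g0 : forall j, g j != 0 by move=> j; exact: (forallP gP j).
have P0 : \prod_(i < m) g i != 0 by apply/prodf_neq0 => i _; apply: g0.
set P := \prod_(i < m) g i; set S := \sum_(i < m) g i.
rewrite (reindex_inj (mulIf (invr_neq0 P0))) /=.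
apply: eq_big => [c|c c0]; first by rewrite mulf_eq0 invr_eq0 (negbTE P0) orbF.
rewrite big_ord_recl big_ord_recl /= splitff0.
have sS x : \sum_(i < m) @splitff m (g, x) (lift ord0 i) = S.
  by apply: eq_bigr => i _; rewrite splitffS.
have pS x : \prod_(i < m) @splitff m (g, x) (lift ord0 i) = P.
  by apply: eq_bigr => i _; rewrite splitffS.
rewrite sS pS /= -/P -lam_add //.
congr (lam r _).
rewrite divfK //.
by rewrite addrC (addrC (c / P)).
Qed.

End Kl.



Section Fin.
Variables (F : finFieldType) (r : nat).
Hypotheses (hr : (0 < r)%N) (hF : #|F| = (2 ^ r)%N).

Lemma AsumK m (b : F) :
  Asum F (lam r) m.+1 b = (#|F| ^ 'C(m.+1, 2))%:R * Kloost r m b.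
Proof.
have rec := Asum_rec F (lam r) (lam_add F r hr hF) (lam0 F r) (lam_sum0 F r hr hF).
elim: m b => [|m IH] b.
  have := rec 0%N b; rewrite add1n => ->.
  rewrite (bigD1 1) ?oner_eq0 //= Asum0 ?lam0 // eqxx mulr1 divr1.
  rewrite big1 => [|c /andP[_ c1]]; last by rewrite Asum0 ?lam0 // (negbTE c1) mulr0.
  by rewrite addr0 Kloost0 bin_small // !expn0 mul1r.
have := rec m.+1 b; rewrite add1n => ->.
under eq_bigr do rewrite IH mulrCA.
rewrite -big_distrr /= mulrA -natrM -expnD (Kloost_rec F r hr hF).
by rewrite [in RHS]binS bin1 addnC.
Qed.

End Fin.



Section Fin2.
Variables (F : finFieldType) (r : nat).
Hypotheses (hr : (0 < r)%N) (hF : #|F| = (2 ^ r)%N).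

Lemma opp2 (x : F) : - x = x.
Proof.
apply/eqP; rewrite eq_sym -subr_eq0 opprK -mulr2n -mulr_natr.
by rewrite (two0 F r hF) mulr0.
Qed.

Lemma frob_inj k : injective (fun x : F => x ^+ (2 ^ k)).
Proof.
move=> x y /= e; apply/eqP; rewrite -subr_eq0 opp2.
have := expf_eq0 (x + y) (2 ^ k); rewrite expn_gt0 /= => <-.
by rewrite (frobk F r hF) e -[X in X + _]opp2 addNr.
Qed.

Lemma Kfrob m k (b : F) : Kloost r m (b ^+ (2 ^ k)) = Kloost r m b.
Proof.
pose phi (al : {ffun 'I_m -> F}) := [ffun i => al i ^+ (2 ^ k)].
have phi_inj : injective phi.
  move=> f g /ffunP e; apply/ffunP => i; have := e i; rewrite !ffunE; exact: frob_inj.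
rewrite /Kloost (reindex_inj phi_inj) /=.
apply: eq_big => [al|al _].
  by apply: eq_forallb => i; rewrite ffunE expf_eq0 expn_gt0.
have sm : \sum_(i < m) phi al i = (\sum_(i < m) al i) ^+ (2 ^ k).
  rewrite (eq_bigr (fun i => al i ^+ (2 ^ k))) => [|i _]; last by rewrite ffunE.
  symmetry; apply: (big_morph (fun z : F => z ^+ (2 ^ k))); first by move=> x y; exact: (frobk F r hF).
  by rewrite expr0n expn_eq0.
have pr : \prod_(i < m) phi al i = (\prod_(i < m) al i) ^+ (2 ^ k).
  by rewrite -prodrXl; apply: eq_bigr => i _; rewrite ffunE.
rewrite sm pr -exprVn -exprMn -(frobk F r hF).
exact: (lam_frob F r hr hF).
Qed.

End Fin2.



Section Card.
Variables (F : finFieldType).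

Lemma card_det m (b : F) : b != 0 ->
  #|[pred g : 'M[F]_m.+1 | \det g == b]| = #|[pred g : 'M[F]_m.+1 | \det g == 1]|.
Proof.
move=> b0.
pose Db : 'M[F]_m.+1 := diag_mx (\row_(i < m.+1) (if i == ord0 then b else 1)).
have dDb : \det Db = b.
  rewrite det_diag (bigD1 ord0) //= mxE eqxx big1 ?mulr1 // => i ne.
  by rewrite mxE (negbTE ne).
have uDb : Db \in unitmx by rewrite unitmxE dDb unitfE.
rewrite -!sum1_card (reindex_inj (can_inj (mulKmx uDb))) /=.
apply: eq_bigl => g; rewrite !inE det_mulmx dDb -[X in _ == X](mulr1 b).
by rewrite (inj_eq (mulfI b0)).
Qed.

Lemma card_SL m :
  #|SLset F m.+1| = (#|F| ^ 'C(m.+1, 2) * \prod_(2 <= j < m.+2) (#|F| ^ j - 1))%N.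
Proof.
have := card_GL F (ltn0Sn m); rewrite cardsT /= card_sub.
rewrite -sum1_card (partition_big (fun g : 'M[F]_m.+1 => \det g) (fun b => b != 0)) /=;
  last by move=> g; rewrite unfold_in unitmxE unitfE.
rewrite (eq_bigr (fun _ => #|SLset F m.+1|)) => [|b b0]; last first.
  rewrite sum1_card /SLset cardsE -(@card_det m b b0).
  apply: eq_card => g; rewrite unfold_in !inE /= unitmxE unitfE.
  by have [->|] := eqVneq (\det g) b; rewrite ?b0 ?andbF.
rewrite sum_nat_const.
have -> : #|(fun i : F => i != 0)| = #|F|.-1 by rewrite -(cardC1 (0 : F)).
rewrite big_ltn // expn1 subn1 mulnCA => /eqP.
have q1 : (0 < #|F|.-1)%N by rewrite -subn1 subn_gt0 finNzRing_gt1.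
by rewrite eqn_pmul2l // => /eqP.
Qed.

End Card.



Lemma main_gen (F : finFieldType) r (hr : (0 < r)%N) (hF : #|F| = (2 ^ r)%N)
  (a : F) (ha : a != 0) s m (hn : (2 ^ s)%N = m.+1) :
  (weight_ca r m.+1 a)%:R = 2^-1 * ((#|F| ^ 'C(m.+1, 2) * \prod_(2 <= j < m.+2) (#|F| ^ j - 1))%:R
     - (#|F| ^ 'C(m.+1, 2))%:R * Kloost r m a) :> rat.
Proof.
rewrite -card_SL.
set S := \sum_(g : 'M[F]_m.+1 | \det g == 1) lam r (a * \tr g).
have hS : S = (#|F| ^ 'C(m.+1, 2))%:R * Kloost r m a.
  rewrite -(Kfrob F r hr hF m s a) hn -(AsumK F r hr hF).
  rewrite /Asum (reindex_inj (scalerI ha)) /=.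
  apply: eq_big => g; last by rewrite mxtraceZ.
  by rewrite detZ -[X in _ = (_ == X)]mulr1 (inj_eq (mulfI (expf_neq0 _ ha))).
have hW : S = #|SLset F m.+1|%:R - 2 * (weight_ca r m.+1 a)%:R.
  rewrite /S /weight_ca.
  have -> : \sum_(g : 'M[F]_m.+1 | \det g == 1) lam r (a * \tr g) =
      \sum_(g in SLset F m.+1) (1 - 2 * ((abs_tr r (a * \tr g) != 0) : nat)%:R).
    apply: eq_big => [g|g _]; first by rewrite inE.
    by rewrite /lam; case: eqP => _ /=; rewrite ?mulr0 ?subr0 // mulr1.
  rewrite sumrB sumr_const -big_distrr /= -natr_sum; congr (_ - 2 * _%:R).
  rewrite -sum1_card [RHS]big_mkcond [LHS]big_mkcond /=.
  apply: eq_bigr => g _; rewrite !inE.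
  by case: (\det g == 1); case: (abs_tr r (a * \tr g) != 0).
by rewrite -hS hW; field.
Qed.

Theorem proposition10 (s r : nat) (F : finFieldType)
  (hs : (0 < s)%N) (hr : (0 < r)%N) (hF : #|F| = (2 ^ r)%N)
  (a : F) (ha : a != 0) :
  let n := (2 ^ s)%N in
  let q := (2 ^ r)%N in
  let N := (q ^ 'C(n, 2) * \prod_(2 <= j < n.+1) (q ^ j - 1))%N in
  (weight_ca r n a)%:R =
    2^-1 * (N%:R - (q ^ 'C(n, 2))%:R * Kloost r n.-1 a) :> rat.
Proof.
move=> n q N.
have [m hm] : exists m, (2 ^ s)%N = m.+1 by exists (2 ^ s).-1; rewrite prednK // expn_gt0.
rewrite /N /q /n hm -hF succnK.
exact: (main_gen F r hr hF a ha s m hm).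
Qed.
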